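(* Let $n\ge 1$ and define $A_n^{(\mathsf{cyc}^*-\mathsf{fix}^*,\mathsf{exc})}(q,t)=\sum_{\sigma\in\mathfrak{S}_n}q^{(\mathsf{cyc}^*-\mathsf{fix}^* )\sigma}t^{\mathsf{exc}\,\sigma}$. Then $$A_{n}^{(\mathsf{cyc}^*-\mathsf{fix}^*, \mathsf{exc})}(q, t)=\left(\frac{1+xt}{1+x}\right)^{n-1}P^{(\mathsf{cyc}^*-\mathsf{fix}^*, \mathsf{cpk}^*,\mathsf{exc})}\left(\mathfrak{S}_n; q, \frac{(1+x)^{2}t}{(x+t)(1+xt)},\frac{x+t}{1+xt}\right),$$ equivalently, $$P^{(\mathsf{cyc}^*-\mathsf{fix}^*, \mathsf{cpk}^*,\mathsf{exc})}(\mathfrak{S}_n; q, x,t)=\left(\frac{1+u}{1+uv}\right)^{n-1}A_{n}^{(\mathsf{cyc}^*-\mathsf{fix}^*,\mathsf{exc})}(q, v),$$ where $u=\frac{1+t^{2}-2xt-(1-t)\sqrt{(1+t)^{2}-4xt}}{2(1-x)t}$ and $v=\frac{(1+t)^{2}-2xt-(1+t)\sqrt{(1+t)^{2}-4xt}}{2xt}$.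
   Context: $\mathfrak{S}_n$ is the set of permutations of $[n]$. $P^{(\mathsf{stat}_1,\ldots,\mathsf{stat}_m)}(\Omega;t_1,\ldots,t_m)=\sum_{\sigma\in\Omega}\prod_j t_j^{\mathsf{stat}_j\sigma}$. For $\sigma\in\mathfrak{S}_n$, $\mathsf{exc}\,\sigma=\#\{i:\sigma(i)>i\}$. The star companion $\sigma^*$ is the permutation of $\{0,\dots,n\}$ with $\sigma^*(0)=n$, $\sigma^*(i)=\sigma(i)-1$ for $i\in[n]$. $\mathsf{cyc}^*\sigma$ is the number of cycles of $\sigma^*$; $\mathsf{fix}^*\sigma=\#\{i\in[n-1]:\sigma^*(i)=i\}$; $\mathsf{cpk}^*\sigma=\#\{i\in[n-1]:(\sigma^* )^{-1}(i)<i>\sigma^*(i)\}$. *)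

(* Defs.v *)
From HB Require Import structures.
From mathcomp Require Import all_boot all_order fingroup perm all_algebra.
Set Implicit Arguments. Unset Strict Implicit. Unset Printing Implicit Defensive.
Import Order.TTheory GRing.Theory Num.Theory.

(* Permutations of [n] = {1..n} are represented 0-based as s : 'S_n
   (s i = sigma (i+1) - 1).  The set {0..n} is 'I_n.+1. *)

(* sigma^* : sigma^*(0) = n, sigma^*(i) = sigma(i) - 1 for i in [n].
   With j = i+1 in 'I_n.+1 (j <> 0), sigma^*(j) = sigma(i+1) - 1 = s i. *)
Definition star_fun n (s : 'S_n) (j : 'I_n.+1) : 'I_n.+1 :=
  if unlift ord0 j is Some i then widen_ord (leqnSn n) (s i) else ord_max.

Lemma star_fun_inj n (s : 'S_n) : injective (star_fun s).
Proof.
move=> j k; rewrite /star_fun.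
case: unliftP => [i ->|->]; case: unliftP => [i' ->|->] //.
- by move=> /(congr1 val) /= /val_inj /perm_inj ->.
- by move=> /(congr1 val) /= Hi; move: (ltn_ord (s i)); rewrite Hi ltnn.
- by move=> /(congr1 val) /= Hi; move: (ltn_ord (s i')); rewrite -Hi ltnn.
Qed.

Definition star n (s : 'S_n) : {perm 'I_n.+1} := perm (@star_fun_inj n s).

Definition exc n (s : 'S_n) : nat := #|[set i : 'I_n | val i < val (s i)]|.

Definition cycstar n (s : 'S_n) : nat := #|porbits (star s)|.

Definition fixstar n (s : 'S_n) : nat :=
  #|[set i : 'I_n.+1 | [&& 0 < val i, val i < n & star s i == i]]|.

Definition cpkstar n (s : 'S_n) : nat :=
  #|[set i : 'I_n.+1 | [&& 0 < val i, val i < n, val ((star s)^-1%g i) < val i & val (star s i) < val i]]|.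

(* cyc^* - fix^* (always >= 0, since every fixed point counted by fix^* is
   its own cycle of sigma^* ) *)
Definition cycfix n (s : 'S_n) : nat := cycstar s - fixstar s.

Local Open Scope ring_scope.

Definition Acf (R : comNzRingType) n (q t : R) : R :=
  \sum_(s : 'S_n) q ^+ cycfix s * t ^+ exc s.

Definition Pccx (R : comNzRingType) n (q x t : R) : R :=
  \sum_(s : 'S_n) q ^+ cycfix s * x ^+ cpkstar s * t ^+ exc s.

(* Main.v *)
Require Import Defs.
From HB Require Import structures.
From mathcomp Require Import all_boot all_order fingroup perm all_algebra.
From mathcomp Require Import zify ring.
Import Order.TTheory GRing.Theory Num.Theory.
Set Implicit Arguments. Unset Strict Implicit. Unset Printing Implicit Defensive.

Definition ty (p i s : nat) : nat :=
  if s == i then 4 else if p < i then (if s < i then 0 else 2)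
  else (if s < i then 3 else 1).

Lemma sum_point (lo hi x : nat) (g g' : nat -> nat) :
  (forall i, lo <= i < hi -> i != x -> g' i = g i) -> lo <= x < hi ->
  \sum_(lo <= i < hi) g' i + g x = \sum_(lo <= i < hi) g i + g' x.
Proof.
move=> H /andP[lx xh].
rewrite !(@big_cat_nat _ _ _ x lo hi) //=; try lia.
rewrite !(@big_cat_nat _ _ _ x.+1 x hi) //= ; try lia.
rewrite !big_nat1.
rewrite (@eq_big_nat _ _ _ lo x g' g); last by move=> i Hi; apply: H; lia.
rewrite (@eq_big_nat _ _ _ x.+1 hi g' g); last by move=> i Hi; apply: H; lia.
lia.
Qed.

Lemma sum_eq_nat (lo hi : nat) (g g' : nat -> nat) :
  (forall i, lo <= i < hi -> g' i = g i) ->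
  \sum_(lo <= i < hi) g' i = \sum_(lo <= i < hi) g i.
Proof. by move=> H; apply: eq_big_nat. Qed.

Lemma sum_restrict (m lo hi : nat) (Q : nat -> bool) : hi <= m ->
  \sum_(0 <= i < m) ((lo <= i < hi) && Q i) = \sum_(lo <= i < hi) Q i.
Proof.
move=> hm; case: (leqP hi lo) => hl.
  rewrite [RHS]big_geq // big1_seq // => i /andP[_]; rewrite mem_iota; lia.
rewrite (@big_cat_nat _ _ _ lo 0 m) //=; last by lia.
rewrite (@big_cat_nat _ _ _ hi lo m) //=; last by lia.
rewrite big1_seq; last by move=> i /andP[_]; rewrite mem_iota; lia.
rewrite [X in _ + (_ + X)]big1_seq; last by move=> i /andP[_]; rewrite mem_iota; lia.
rewrite add0n addn0; apply: eq_big_nat => i Hi.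
by have -> : (lo <= i < hi) = true by lia.
Qed.

Lemma card_set_nat (m : nat) (Q : nat -> bool) :
  #|[set i : 'I_m | Q i]| = \sum_(0 <= i < m) Q i.
Proof.
rewrite -sum1_card big_mkcond /= big_mkord; apply: eq_bigr => i _.
by rewrite inE; case: (Q i).
Qed.

Definition cntf (Pf Sf : nat -> nat) N T := \sum_(1 <= i < N) (ty (Pf i) i (Sf i) == T).

Lemma ty_cmp p p' i s : (p < i) = (p' < i) -> ty p i s = ty p' i s.
Proof. by rewrite /ty => ->. Qed.

Lemma bumpE n x : bump n x = if n <= x then x.+1 else x.
Proof. by rewrite /bump; case: leqP. Qed.

Lemma unbumpE n x : unbump n x = if n < x then x.-1 else x.
Proof. by rewrite /unbump; case: ltnP => /= _; rewrite ?subn1 ?subn0. Qed.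

Lemma bump_lt n x i : i < n -> (bump n x < i) = (x < i).
Proof. rewrite bumpE; case: ifP => H Hi; lia. Qed.

Section Ins.
Variables (n : nat) (S P : nat -> nat).
Hypothesis n1 : 0 < n.
Hypothesis SP : forall i, i <= n -> S (P i) = i.
Hypothesis PS : forall i, i <= n -> P (S i) = i.
Hypothesis Sle : forall i, i <= n -> S i <= n.
Hypothesis Ple : forall i, i <= n -> P i <= n.
Hypothesis S0 : S 0 = n.
Variable j : nat.
Hypothesis j1 : 1 <= j <= n.+1.

Definition Sh x := if x == n then n else bump n (S (unbump n x)).
Definition Ph x := if x == n then n else bump n (P (unbump n x)).
Definition S' i := Sh (if i == j then n else if i == n then j else i).
Definition P' i := let y := Ph i in if y == j then n else if y == n then j else y.

Lemma Pn0 : P n = 0.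
Proof. by rewrite -S0 PS. Qed.

Lemma S_lt i : 1 <= i <= n -> S i < n.
Proof.
move=> Hi; have H1 : S i <= n by apply: Sle; lia.
case: (eqVneq (S i) n) => E; last by lia.
have := PS (i:=i); rewrite E Pn0; lia.
Qed.

Lemma P_ge1 i : i < n -> 1 <= P i.
Proof.
move=> Hi; case E: (P i) => //; have := SP (i:=i); rewrite E S0; lia.
Qed.

Lemma bump_neq x : bump n x != n.
Proof. rewrite bumpE; case: ifP => H; lia. Qed.

Lemma S'_mid i : 1 <= i < n -> S' i = if i == j then n else S i.
Proof.
move=> Hi; rewrite /S'; case: (eqVneq i j) => [_|Nij]; first by rewrite /Sh !eqxx.
have -> : (i == n) = false by lia.
rewrite /Sh; have -> : (i == n) = false by lia.
have -> : unbump n i = i by rewrite unbumpE; case: ifP => H; lia.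
have := S_lt (i:=i); rewrite bumpE; case: ifP => H; lia.
Qed.

Lemma P'_mid i : 1 <= i < n -> P' i = if bump n (P i) == j then n else bump n (P i).
Proof.
move=> Hi; rewrite /P' /Ph.
have -> : (i == n) = false by lia.
have -> : unbump n i = i by rewrite unbumpE; case: ifP => H; lia.
by case: eqP => //; rewrite (negbTE (bump_neq _)).
Qed.

Lemma S'_n : S' n = Sh j.
Proof. by rewrite /S' eqxx; case: eqP => // ->. Qed.

Lemma P'_n : P' n = j.
Proof. by rewrite /P' /Ph eqxx; case: (eqVneq n j) => [->|]; rewrite ?eqxx. Qed.

Definition ty' i := ty (P' i) i (S' i).
Definition tyo i := ty (P i) i (S i).

Lemma cnt_split T : cntf P' S' n.+1 T = \sum_(1 <= i < n) (ty' i == T) + (ty j n (Sh j) == T).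
Proof.
rewrite /cntf big_nat_recr /=; last by lia.
by rewrite /ty' P'_n S'_n.
Qed.

Lemma ty'_mid i : 1 <= i < n ->
  ty' i = if i == j then ty (P i) i n
          else if (j < n) && (i == S j) then ty n i (S i) else tyo i.
Proof.
move=> Hi; rewrite /ty' S'_mid // P'_mid //.
have Pi1 := P_ge1 (i:=i); have Pin : P i <= n by apply: Ple; lia.
case: (eqVneq i j) => [Eij|Nij].
  subst i; apply: ty_cmp.
  case: eqP => [E|_]; last by rewrite bump_lt //; lia.
  have : P j = j.
    move: E; rewrite bumpE; case: ifP => H; lia.
  move=> E2; rewrite E2 ltnn; lia.
case: eqP => [E|NE].
  case: (ltnP j n) => Hj /=.
    have Pij : P i = j by move: E; rewrite bumpE; case: ifP => H; lia.
    have -> : i == S j by rewrite -Pij SP //; lia.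
    done.
  rewrite /tyo; apply: ty_cmp; move: E; rewrite bumpE; case: ifP => H; lia.
have -> : (j < n) && (i == S j) = false.
  apply/negP => /andP[Hj /eqP Ei]; apply: NE.
  rewrite Ei PS; last by lia.
  rewrite bumpE; case: ifP => H; lia.
rewrite /tyo; apply: ty_cmp; rewrite bump_lt //; lia.
Qed.

Lemma ty_cmps p i s s' : (s == i) = (s' == i) -> (s < i) = (s' < i) -> ty p i s = ty p i s'.
Proof. by rewrite /ty => -> ->. Qed.

Lemma mid_eq_nj : j >= n -> forall i, 1 <= i < n -> ty' i = tyo i.
Proof.
move=> Hj i Hi; rewrite ty'_mid //.
have -> : (i == j) = false by lia.
by have -> : (j < n) = false by lia.
Qed.

Lemma cnt_jn : j = n -> forall T, cntf P' S' n.+1 T = cntf P S n T + (T == 4).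
Proof.
move=> Hj T; rewrite cnt_split /cntf (sum_eq_nat (g := fun i => tyo i == T)); last first.
  by move=> i Hi; rewrite mid_eq_nj //; lia.
by rewrite Hj /Sh eqxx /ty eqxx eq_sym.
Qed.

Lemma cnt_jn1 : j = n.+1 -> forall T, cntf P' S' n.+1 T = cntf P S n T + (T == 3).
Proof.
move=> Hj T; rewrite cnt_split /cntf (sum_eq_nat (g := fun i => tyo i == T)); last first.
  by move=> i Hi; rewrite mid_eq_nj //; lia.
rewrite Hj /Sh.
have -> : (n.+1 == n) = false by lia.
have -> : unbump n n.+1 = n by rewrite unbumpE ltnSn.
have Sn : S n < n by apply: S_lt; lia.
have -> : bump n (S n) = S n by rewrite bumpE; case: ifP => H; lia.
rewrite /ty.
have -> : (S n == n) = false by lia.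
have -> : (n.+1 < n) = false by lia.
by rewrite Sn /= eq_sym.
Qed.

Definition xj := if j < S j then S j else j.

Lemma xj_range : 1 <= j < n -> 1 <= xj < n.
Proof.
move=> Hj; rewrite /xj; case: ifP => // H; have : S j < n by apply: S_lt; lia.
  lia.
Qed.

Lemma mid_eq_j : 1 <= j < n -> forall i, 1 <= i < n -> i != xj -> ty' i = tyo i.
Proof.
move=> Hj i Hi Hx; rewrite ty'_mid //.
case: eqP => [Eij|Nij].
  subst i; move: Hx; rewrite /xj; case: ifP => H Hx; last by rewrite eqxx in Hx.
  have Sj : S j < n by apply: S_lt; lia.
  rewrite /tyo; apply: ty_cmps; lia.
have -> : j < n by lia.
case: eqP => [Ei|] //=.
rewrite /tyo; apply: ty_cmp.
have Pi : P i = j by rewrite Ei PS //; lia.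
rewrite Pi; move: Hx; rewrite /xj; case: ifP => H Hx.
  by rewrite Ei eqxx in Hx.
lia.
Qed.

Lemma cnt_jmid : 1 <= j < n -> forall T,
  cntf P' S' n.+1 T + (tyo xj == T) = cntf P S n T + (ty' xj == T) + (0 == T).
Proof.
move=> Hj T; rewrite cnt_split /cntf.
have E := (@sum_point 1 n xj (fun i => tyo i == T) (fun i => ty' i == T)).
rewrite /= in E; rewrite -addnA [X in _ + X]addnC addnA E; last by apply: xj_range.
  2: by move=> i Hi Hx; rewrite mid_eq_j.
congr (_ + _); rewrite /Sh.
have -> : (j == n) = false by lia.
have -> : unbump n j = j by rewrite unbumpE; case: ifP => H; lia.
have Sj : S j < n by apply: S_lt; lia.
have -> : bump n (S j) = S j by rewrite bumpE; case: ifP => H; lia.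
rewrite /ty.
have -> : (S j == n) = false by lia.
have -> : j < n by lia.
by rewrite Sj eq_sym.
Qed.

Lemma case_fix : 1 <= j < n -> S j = j -> tyo xj = 4 /\ ty' xj = 1.
Proof.
move=> Hj E; rewrite /xj E ltnn; split; first by rewrite /tyo /ty E eqxx.
rewrite ty'_mid ?eqxx //.
have -> : P j = j by rewrite -{1}E PS //; lia.
rewrite /ty; have -> : (n == j) = false by lia.
by rewrite ltnn; have -> : (n < j) = false by lia.
Qed.

Lemma case_desc : 1 <= j < n -> S j < j ->
  [/\ xj = j, tyo j = (if P j < j then 0 else 3) & ty' j = (if P j < j then 2 else 1)].
Proof.
move=> Hj E; have E' : (j < S j) = false by lia.
rewrite /xj E'; split => //.
  have -> : tyo j = ty (P j) j (S j) by [].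
  rewrite /ty; have -> : (S j == j) = false by lia.
  by rewrite E.
rewrite ty'_mid ?eqxx // /ty; have -> : (n == j) = false by lia.
have -> : (n < j) = false by lia.
have : P j != j.
  apply/eqP => E2; have : S (P j) = j by apply: SP; lia.
  rewrite E2; lia.
by case: ltngtP.
Qed.

Lemma case_asc : 1 <= j < n -> j < S j ->
  [/\ xj = S j, 1 <= S j < n, P (S j) = j,
     tyo (S j) = (if S (S j) < S j then 0 else 2) &
     ty' (S j) = (if S (S j) < S j then 3 else 1)].
Proof.
move=> Hj E; have Sj : S j < n by apply: S_lt; lia.
have PSj : P (S j) = j by rewrite PS //; lia.
rewrite /xj E; split => //; first by lia.
  rewrite /tyo /ty PSj.
  have -> : (S (S j) == S j) = false.
    apply/negP => /eqP E2; have := PS (i:= S j); rewrite E2 PSj; lia.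
  by rewrite E.
rewrite ty'_mid; last by lia.
have -> : (S j == j) = false by lia.
have -> : j < n by lia.
rewrite eqxx /= /ty.
have -> : (S (S j) == S j) = false.
  apply/negP => /eqP E2; have := PS (i:= S j); rewrite E2 PSj; lia.
by have -> : (n < S j) = false by lia.
Qed.

End Ins.

Ltac simp_if := match goal with |- context [if ?b then _ else _] =>
  first [ rewrite (_ : b = true); last by lia | rewrite (_ : b = false); last by lia ] end.

Definition LHSn n (f : nat -> nat) (jj x : nat) : nat :=
  let t1 y := if y == n.-1 then n else if y == n then n.-1 else y in
  let t2 y := if y == jj then n else if y == n then jj else y in
  let st z := if z == n then n else bump n (f (unbump n z)) in
  if x == 0 then n.+1 else if x <= n.+1 then st (t2 (t1 x.-1)) else x.

Definition RHSn n (f : nat -> nat) (j x : nat) : nat :=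
  let t3 y := if y == j then n else if y == n then j else y in
  let pi w := if w == 0 then n else if w <= n then f w.-1 else w in
  let ph z := if z == n then n else bump n (pi (unbump n z)) in
  ph (t3 x).

Definition jv n (jj : nat) := if jj < n.-1 then jj.+1 else if jj == n.-1 then n.+1 else n.

Lemma star_ins_nat n (f : nat -> nat) jj x : 0 < n -> jj <= n -> x < n.+2 ->
  (forall y, y < n -> f y < n) -> LHSn n f jj x = RHSn n f (jv n jj) x.
Proof.
move=> n0 jjn xn fb; rewrite /LHSn /RHSn /jv !bumpE !unbumpE.
have fb' : forall y, y < n -> (n <= f y) = false by move=> y /fb; lia.
have key : forall a b, a = b -> f a = f b by move=> a b ->.
case: (ltnP jj n.-1) => Hjj; [| case: (eqVneq jj n.-1) => Hjj2];
case: (eqVneq x 0) => x0;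
case: (eqVneq x jj.+1) => xj;
case: (eqVneq x n) => xn';
case: (eqVneq x n.+1) => xn1;
  repeat simp_if; rewrite ?fb' //; repeat simp_if; try lia; try (apply: key; lia).
Qed.

Definition Sg m (p : {perm 'I_m}) (x : nat) : nat :=
  if insub x is Some i then val (p i) else x.

Lemma Sg_ord m (p : {perm 'I_m}) (i : 'I_m) : Sg p i = p i.
Proof. by rewrite /Sg valK. Qed.

Lemma Sg_out m (p : {perm 'I_m}) x : m <= x -> Sg p x = x.
Proof. by move=> H; rewrite /Sg insubF // ltnNge H. Qed.

Lemma Sg_lt m (p : {perm 'I_m}) x : x < m -> Sg p x < m.
Proof. by move=> H; rewrite -[x]/(nat_of_ord (Ordinal H)) Sg_ord. Qed.

Lemma Sg_M m (a b : {perm 'I_m}) x : Sg (a * b) x = Sg b (Sg a x).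
Proof.
case: (ltnP x m) => H; last by rewrite !Sg_out.
by rewrite -[x]/(nat_of_ord (Ordinal H)) !Sg_ord permM.
Qed.

Lemma Sg_K m (p : {perm 'I_m}) x : Sg p (Sg p^-1 x) = x.
Proof. by rewrite -Sg_M mulVg /Sg; case: insubP => // i _ <-; rewrite perm1. Qed.

Lemma Sg_Kv m (p : {perm 'I_m}) x : Sg p^-1 (Sg p x) = x.
Proof. by rewrite -Sg_M mulgV /Sg; case: insubP => // i _ <-; rewrite perm1. Qed.

Lemma Sg_tperm m (u v : 'I_m) x :
  Sg (tperm u v) x = if x == nat_of_ord u then nat_of_ord v else if x == nat_of_ord v then nat_of_ord u else x.
Proof.
case: (ltnP x m) => H; last first.
  rewrite Sg_out //; have -> : (x == u) = false by have := ltn_ord u; lia.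
  by have -> : (x == v) = false by have := ltn_ord v; lia.
rewrite -[x]/(nat_of_ord (Ordinal H)) Sg_ord.
case: tpermP => [->|->|a b]; rewrite ?eqxx //=.
  by case: eqP.
have -> : (x == u) = false by apply/eqP => E; apply: a; apply: val_inj.
by have -> : (x == v) = false by apply/eqP => E; apply: b; apply: val_inj.
Qed.

Lemma Sg_lift m (i : 'I_m.+1) (p : {perm 'I_m}) x :
  Sg (lift_perm i i p) x = if x == nat_of_ord i then nat_of_ord i else bump i (Sg p (unbump i x)).
Proof.
case: (ltnP x m.+1) => H; last first.
  have Hi := ltn_ord i.
  have Hu : unbump i x = x.-1 by rewrite unbumpE; case: ifP; lia.
  rewrite Hu Sg_out // Sg_out; last by lia.
  have -> : (x == i) = false by lia.
  rewrite bumpE; case: ifP; lia.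
rewrite -[x]/(nat_of_ord (Ordinal H)) Sg_ord.
case: (unliftP i (Ordinal H)) => [k|] E; rewrite E.
  rewrite lift_perm_lift.
  have -> : (nat_of_ord (lift i k) == nat_of_ord i) = false.
    by apply/negbTE; rewrite val_eqE eq_sym; exact: (neq_lift i k).
  by rewrite /= bumpK Sg_ord.
by rewrite lift_perm_id eqxx.
Qed.

Lemma Sg_star n (s : 'S_n) x :
  Sg (star s) x = if x == 0 then n else if x <= n then Sg s x.-1 else x.
Proof.
case: (ltnP x n.+1) => H; last first.
  rewrite Sg_out //; have -> : (x == 0) = false by lia.
  by have -> : (x <= n) = false by lia.
rewrite -[x]/(nat_of_ord (Ordinal H)) Sg_ord /star permE /star_fun.
case: (unliftP ord0 (Ordinal H)) => [k|] E; rewrite E /=.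
  have -> : bump 0 k = k.+1 by rewrite /bump.
  have Hk : k < n := ltn_ord k.
  by rewrite Hk add0n Sg_ord.
by [].
Qed.

Lemma perm_Sg m (p q : {perm 'I_m}) : (forall x, x < m -> Sg p x = Sg q x) -> p = q.
Proof. by move=> H; apply/permP => i; apply: val_inj; have := H i (ltn_ord i); rewrite !Sg_ord. Qed.

Definition ins n (s : 'S_n) (jj : 'I_n.+1) : 'S_n.+1 :=
  tperm (inord n.-1) ord_max * tperm jj ord_max * lift_perm ord_max ord_max s.
Definition piins n (p : {perm 'I_n.+1}) (j : 'I_n.+2) : {perm 'I_n.+2} :=
  tperm j (inord n) * lift_perm (inord n) (inord n) p.
Definition jmap n (jj : 'I_n.+1) : 'I_n.+2 := inord (jv n jj).

Lemma jv_le n jj : jj <= n -> jv n jj <= n.+1.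
Proof. rewrite /jv; case: ifP => H; [|case: ifP => H']; lia. Qed.

Lemma star_ins n (s : 'S_n) (jj : 'I_n.+1) : 0 < n ->
  star (ins s jj) = piins (star s) (jmap jj).
Proof.
move=> n0; apply: perm_Sg => x Hx.
have jjn : (jj : nat) <= n by have := ltn_ord jj; lia.
transitivity (LHSn n (Sg s) jj x).
  rewrite Sg_star /LHSn /ins !Sg_M !Sg_tperm Sg_lift /= inordK; last by lia.
  by [].
transitivity (RHSn n (Sg s) (jv n jj) x); last first.
  rewrite /RHSn /piins Sg_M Sg_tperm Sg_lift /jmap !inordK //; last by apply: jv_le.
  by rewrite Sg_star.
by apply: star_ins_nat => // y Hy; exact: Sg_lt.
Qed.

Lemma ty0 p i s : (ty p i s == 0) = (p < i) && (s < i).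
Proof. rewrite /ty; repeat case: ifP; lia. Qed.
Lemma ty4 p i s : (ty p i s == 4) = (s == i).
Proof. rewrite /ty; repeat case: ifP; lia. Qed.
Lemma ty_exc p i s : (i <= s) = (ty p i s == 1) + (ty p i s == 2) + (ty p i s == 4) :> nat.
Proof. rewrite /ty; repeat case: ifP; lia. Qed.

Definition cnt n (s : 'S_n) T := cntf (Sg (star s)^-1%g) (Sg (star s)) n T.

Lemma cnt_set n (s : 'S_n) T (Q : nat -> nat -> nat -> bool) :
  (forall p i q, Q p i q = (ty p i q == T)) ->
  #|[set i : 'I_n.+1 | (0 < val i) && (val i < n) && Q (val ((star s)^-1%g i)) i (val (star s i))]| = cnt s T.
Proof.
move=> HQ.
rewrite (eq_card (B := [set i : 'I_n.+1 | (1 <= val i < n) && (ty (Sg (star s)^-1%g i) i (Sg (star s) i) == T)])); last first.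
  by move=> i; rewrite !inE !Sg_ord HQ.
by rewrite (@card_set_nat _ (fun x => (1 <= x < n) && (ty (Sg (star s)^-1%g x) x (Sg (star s) x) == T))) sum_restrict.
Qed.

Lemma cpk_cnt n (s : 'S_n) : cpkstar s = cnt s 0.
Proof.
rewrite /cpkstar -(@cnt_set _ _ _ (fun p i q => (p < i) && (q < i))); last by move=> *; rewrite ty0.
by apply: eq_card => i; rewrite !inE !andbA.
Qed.

Lemma fix_cnt n (s : 'S_n) : fixstar s = cnt s 4.
Proof.
rewrite /fixstar -(@cnt_set _ _ _ (fun p i q => q == i)); last by move=> *; rewrite ty4.
by apply: eq_card => i; rewrite !inE !andbA -val_eqE.
Qed.

Lemma exc_cnt n (s : 'S_n) : 0 < n -> exc s = cnt s 1 + cnt s 2 + cnt s 4.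
Proof.
move=> n0; rewrite /exc (eq_card (B := [set i : 'I_n | i < Sg s i])); last first.
  by move=> i; rewrite !inE Sg_ord.
rewrite (@card_set_nat _ (fun x => x < Sg s x)).
transitivity (\sum_(1 <= i < n.+1) (i <= Sg (star s) i)).
  rewrite big_add1 /=; apply: eq_big_nat => i Hi; rewrite Sg_star.
  by have -> : i < n by lia.
rewrite big_nat_recr /=; last by lia.
have -> : (n <= Sg (star s) n) = false.
  rewrite Sg_star; have -> : (n == 0) = false by lia.
  rewrite leqnn; have := @Sg_lt _ s n.-1; lia.
rewrite addn0 /cnt /cntf -!big_split /=.
by apply: eq_big_nat => i Hi; rewrite (ty_exc (Sg (star s)^-1%g i)).
Qed.

Lemma porbit_fix (T : finType) (s : {perm T}) x : s x = x -> porbit s x = [set x].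
Proof.
move=> Hs; apply/setP => y; rewrite inE; apply/porbitP/eqP => [[k ->]|->].
  by elim: k => [|k IH]; rewrite ?expg0 ?perm1 // expgSr permM IH Hs.
by exists 0; rewrite expg0 perm1.
Qed.

Section LiftCyc.
Variables (m : nat) (i : 'I_m.+1) (p : {perm 'I_m}).
Let L := lift_perm i i p.
Local Open Scope group_scope.
Let liftS (P : {set 'I_m}) : {set 'I_m.+1} := [set lift i y | y in P].

Lemma iter_lift k x : (L ^+ k) (lift i x) = lift i ((p ^+ k) x).
Proof.
elim: k => [|k IH]; first by rewrite !expg0 !perm1.
by rewrite !expgSr !permM IH lift_perm_lift.
Qed.

Lemma porbit_lift x : porbit L (lift i x) = [set lift i y | y in porbit p x].
Proof.
apply/setP => z; apply/porbitP/imsetP.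
  by case=> k ->; exists ((p ^+ k) x); [apply: mem_porbit | rewrite iter_lift].
by case=> y /porbitP[k ->] ->; exists k; rewrite iter_lift.
Qed.

Lemma card_porbits_lift : #|porbits L| = #|porbits p|.+1.
Proof.
have Li : porbit L i = [set i] by rewrite porbit_fix // /L lift_perm_id.
have E : porbits L = [set i] |: liftS @: porbits p.
  apply/setP => C; rewrite !inE; apply/imsetP/orP.
    case=> y _ ->; case: (unliftP i y) => [x|] ->.
      right; apply/imsetP; exists (porbit p x); first by apply: imset_f.
      by rewrite porbit_lift.
    by left; rewrite Li.
  case => [/eqP -> | /imsetP [P /imsetP[x _ ->] ->]].
    by exists i.
  by exists (lift i x) => //; rewrite porbit_lift.
rewrite E cardsU1 card_imset; last by apply: imset_inj; apply: lift_inj.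
suff -> : [set i] \notin liftS @: porbits p by rewrite add1n.
apply/imsetP => -[P /imsetP[x _ ->] E2].
have : i \in [set i] := set11 i.
rewrite E2 => /imsetP[y _] E3; move: (neq_lift i y); rewrite -E3 eqxx; by [].
Qed.
End LiftCyc.

Lemma cyc_ins n (s : 'S_n) (jj : 'I_n.+1) : 0 < n ->
  cycstar (ins s jj) = cycstar s + (jv n jj == n).
Proof.
move=> n0; rewrite /cycstar star_ins // /piins.
have := porbits_mul_tperm (lift_perm (inord n) (inord n) (star s)) (jmap jj) (inord n).
rewrite card_porbits_lift porbit_fix ?lift_perm_id // inE.
have -> : (jmap jj == inord n :> 'I_n.+2) = (jv n jj == n).
  rewrite -val_eqE /jmap /= !inordK //; apply: jv_le; have := ltn_ord jj; lia.
set X := #|porbits (_ * _)|; set Y := #|porbits (star s)|.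
rewrite -muln2; case: eqP => _ /=; match goal with |- ?A + _ = _ -> _ => have E : X = A by [] end; rewrite -E; lia.
Qed.

Lemma fix_le_cyc n (s : 'S_n) : fixstar s <= cycstar s.
Proof.
rewrite /fixstar /cycstar.
set F := [set i | _].
have -> : #|F| = #|porbit (star s) @: F|.
  rewrite card_in_imset // => x y; rewrite !inE => /and3P[_ _ /eqP Hx] _ E.
  have : y \in porbit (star s) x by rewrite E porbit_id.
  by rewrite porbit_fix // inE => /eqP.
by apply: subset_leq_card; apply/subsetP => C /imsetP[x _ ->]; apply: imset_f.
Qed.

Definition stv (V : Type) (F : nat -> nat -> nat -> nat -> nat -> nat -> V) n (s : 'S_n) : V :=
  F (cycfix s) (cnt s 0) (cnt s 1) (cnt s 2) (cnt s 3) (cnt s 4).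

Section PerS.
Variables (n : nat) (s : 'S_n).
Hypothesis n0 : 0 < n.
Let S := Sg (star s).
Let P := Sg (star s)^-1%g.

Lemma hSP i : i <= n -> S (P i) = i. Proof. by rewrite /S /P Sg_K. Qed.
Lemma hPS i : i <= n -> P (S i) = i. Proof. by rewrite /S /P Sg_Kv. Qed.
Lemma hSle i : i <= n -> S i <= n. Proof. by move=> H; rewrite -ltnS Sg_lt. Qed.
Lemma hPle i : i <= n -> P i <= n. Proof. by move=> H; rewrite -ltnS Sg_lt. Qed.
Lemma hS0 : S 0 = n. Proof. by rewrite /S Sg_star. Qed.
Lemma hPS0 : P n = 0. Proof. by rewrite -hS0 hPS. Qed.

Lemma cnt_ins_eq x T : x <= n ->
  cnt (ins s (inord x)) T = cntf (P' n P (jv n x)) (S' n S (jv n x)) n.+1 T.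
Proof.
move=> Hx; rewrite /cnt star_ins // /cntf; apply: eq_big_nat => i Hi.
have Ej : nat_of_ord (jmap (inord x : 'I_n.+1)) = jv n x.
  by rewrite /jmap inordK ?inordK // ltnS; apply: jv_le.
have En : nat_of_ord (inord n : 'I_n.+2) = n by rewrite inordK.
congr (ty _ _ _ == T).
  rewrite /piins invMg lift_permV tpermV Sg_M Sg_lift Sg_tperm Ej En /P' /Ph /P.
  by [].
by rewrite /piins Sg_M Sg_lift Sg_tperm Ej En /S' /Sh /S.
Qed.

Variable V : Type.
Variable F : nat -> nat -> nat -> nat -> nat -> nat -> V.

Definition Phi (j : nat) : V :=
  let c := cycfix s in let k := cnt s 0 in let v := cnt s 1 in
  let a := cnt s 2 in let d := cnt s 3 in let f := cnt s 4 in
  if j == n then F c k v a d f.+1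
  else if j == n.+1 then F c k v a d.+1 f
  else if S j == j then F c.+1 k.+1 v.+1 a d f.-1
  else if S j < j then (if P j < j then F c k v a.+1 d f else F c k.+1 v.+1 a d.-1 f)
  else (if S (S j) < S j then F c k v a d.+1 f else F c k.+1 v.+1 a.-1 d f).

Lemma stv_ins x : x <= n -> stv F (ins s (inord x)) = Phi (jv n x).
Proof.
move=> Hx; set j := jv n x.
have hj : 1 <= j <= n.+1 by rewrite /j /jv; case: ifP => H1; [|case: ifP => H2]; lia.
have Cy : cycstar (ins s (inord x)) = cycstar s + (j == n).
  by rewrite cyc_ins // inordK.
have C T : cnt (ins s (inord x)) T = cntf (P' n P j) (S' n S j) n.+1 T by apply: cnt_ins_eq.
have FC := fix_le_cyc s.
have HSP := hSP; have HPS := hPS; have HSle := hSle; have HPle := hPle; have HS0 := hS0.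
have cE T : cnt s T = cntf P S n T by [].
rewrite /stv /Phi /cycfix !fix_cnt Cy !C !cE.
rewrite fix_cnt cE in FC.
case: (eqVneq j n) => [Ejn|Njn].
  have H := cnt_jn n0 HSP HPS HSle HPle HS0 hj Ejn.
  rewrite !H /=; congr F; lia.
case: (eqVneq j n.+1) => [Ejn|Njn1].
  have H := cnt_jn1 n0 HSP HPS HSle HPle HS0 hj Ejn.
  rewrite !H /=; congr F; lia.
have hj' : 1 <= j < n by lia.
have H := cnt_jmid n0 HSP HPS HSle HPle HS0 hj hj'.
case: (eqVneq (S j) j) => [Ef|Nf].
  have [E1 E2] := case_fix n0 HSP HPS HSle HPle HS0 hj hj' Ef.
  rewrite E1 E2 in H.
  have H0 := H 0; have H1 := H 1; have H2 := H 2; have H3 := H 3; have H4 := H 4.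
  rewrite /= in H0 H1 H2 H3 H4.
  congr F; lia.
case: (ltnP (S j) j) => Hd.
  have [E1 E2 E3] := case_desc n0 HSP HPS HSle HPle HS0 hj hj' Hd.
  case: (ltnP (P j) j) => Hp; [rewrite Hp in E2 E3 | rewrite (_ : (P j < j) = false) in E2 E3; last by lia];
  rewrite E1 E2 E3 in H;
  have H0 := H 0; have H1 := H 1; have H2 := H 2; have H3 := H 3; have H4 := H 4;
  rewrite /= in H0 H1 H2 H3 H4; congr F; lia.
have Ha : j < S j by lia.
have [E1 E2 E3 E4 E5] := case_asc n0 HSP HPS HSle HPle HS0 hj hj' Ha.
case: (ltnP (S (S j)) (S j)) => Hp; [rewrite Hp in E4 E5 | rewrite (_ : (S (S j) < S j) = false) in E4 E5; last by lia];
rewrite E1 E4 E5 in H;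
have H0 := H 0; have H1 := H 1; have H2 := H 2; have H3 := H 3; have H4 := H 4;
rewrite /= in H0 H1 H2 H3 H4; congr F; lia.
Qed.

Lemma sum_reindexP (G : nat -> nat) :
  \sum_(0 <= j < n.+1) G j = \sum_(0 <= b < n.+1) G (P b).
Proof.
rewrite !big_mkord.
have inj : injective (fun i : 'I_n.+1 => (inord (P i) : 'I_n.+1)).
  move=> i i' /(congr1 val); rewrite /= !inordK; try (rewrite ltnS; apply: hPle; have := ltn_ord i; have := ltn_ord i'; lia).
  move=> E; apply: val_inj => /=; rewrite -(hSP (ltn_ord i)) -(hSP (ltn_ord i')).
  have Hi := ltn_ord i; have Hi' := ltn_ord i'.
  by rewrite -(hSP (i:=i)) ?E ?hSP //; lia.
rewrite (reindex_inj inj) /=; apply: eq_bigr => i _.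
by rewrite inordK // ltnS; apply: hPle; have := ltn_ord i; lia.
Qed.

Lemma P_ge1' b : b < n -> 1 <= P b.
Proof.
move=> Hb; case E: (P b) => //; have := hSP (i:=b); rewrite E hS0; lia.
Qed.

Lemma sum_asc (h : nat -> bool) :
  \sum_(1 <= j < n) ((j < S j) && h (S j)) = \sum_(1 <= b < n) ((P b < b) && h b).
Proof.
rewrite -(@sum_restrict n.+1) // -[RHS](@sum_restrict n.+1) //.
rewrite sum_reindexP; apply: eq_big_nat => b Hb.
rewrite hSP; last by lia.
case: (ltnP b n) => Hbn; last first.
  have -> : b = n by lia.
  by rewrite hPS0 ltnn andbF.
case: (posnP b) => [->|Hb0]; first by rewrite ltn0 /=; case: (1 <= P 0); rewrite andbF.
have := P_ge1' Hbn; case: (ltnP (P b) b) => H1 H2 /=; rewrite ?andbF //.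
by have -> : (1 <= P b < n) by lia.
Qed.
End PerS.

Local Open Scope ring_scope.

Definition TF (V : nmodType) (F : nat -> nat -> nat -> nat -> nat -> nat -> V)
  (c k v a d f : nat) : V :=
  F c k v a d f.+1 + F c k v a d.+1 f *+ k.+1 + F c k v a.+1 d f *+ k
  + F c k.+1 v.+1 a.-1 d f *+ a + F c k.+1 v.+1 a d.-1 f *+ d
  + F c.+1 k.+1 v.+1 a d f.-1 *+ f.

Section SumJJ.
Variables (n : nat) (s : 'S_n).
Hypothesis n0 : (0 < n)%N.
Variable V : comNzSemiRingType.
Variable F : nat -> nat -> nat -> nat -> nat -> nat -> V.
Let S := Sg (star s).
Let P := Sg (star s)^-1%g.
Lemma hPS' i : (i <= n)%N -> P (S i) = i. Proof. exact: hPS. Qed.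
Lemma hSP' i : (i <= n)%N -> S (P i) = i. Proof. exact: hSP. Qed.

Lemma Phi_mid j : (1 <= j < n)%N ->
  let c := cycfix s in let k := cnt s 0 in let v := cnt s 1 in
  let a := cnt s 2 in let d := cnt s 3 in let f := cnt s 4 in
  Phi s F j = F c.+1 k.+1 v.+1 a d f.-1 *+ (ty (P j) j (S j) == 4)%N
    + F c k v a.+1 d f *+ (ty (P j) j (S j) == 0)%N
    + F c k.+1 v.+1 a d.-1 f *+ (ty (P j) j (S j) == 3)%N
    + F c k v a d.+1 f *+ ((j < S j) && (ty (P (S j)) (S j) (S (S j)) == 0))%N
    + F c k.+1 v.+1 a.-1 d f *+ ((j < S j) && (ty (P (S j)) (S j) (S (S j)) == 2))%N.
Proof.
move=> Hj c k v a d f; rewrite /Phi -/S -/P.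
have -> : (j == n) = false by lia.
have -> : (j == n.+1) = false by lia.
rewrite /ty.
have Sjn : (S j < n)%N.
  rewrite /S Sg_star; have -> : (j == 0) = false by lia.
  have -> : (j <= n)%N by lia.
  apply: Sg_lt; lia.
case: (eqVneq (S j) j) => [E|NE].
  have -> : (j < S j)%N = false by lia.
  by rewrite E eqxx /= ?mulr1n ?mulr0n ?addr0.
case: (ltnP (S j) j) => H1.
  have -> : (j < S j)%N = false by lia.
  by case: (ltnP (P j) j) => H2; rewrite /= ?mulr1n ?mulr0n ?addr0 ?add0r.
have -> : (j < S j)%N by lia.
rewrite hPS'; last by lia.
have -> : (S (S j) == S j) = false.
  apply/negP => /eqP E2; have := hPS' (i:= S j); rewrite E2 hPS'; lia.
have -> : (j < S j)%N by lia.
by case: (ltnP (S (S j)) (S j)) => H2; case: (P j < j)%N; rewrite /= ?mulr1n ?mulr0n ?addr0 ?add0r.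
Qed.


Lemma sum_jj : \sum_(jj < n.+1) stv F (ins s jj) =
  TF F (cycfix s) (cnt s 0) (cnt s 1) (cnt s 2) (cnt s 3) (cnt s 4).
Proof.
transitivity (\sum_(0 <= x < n.+1) Phi s F (jv n x)).
  rewrite big_mkord; apply: eq_bigr => i _.
  by rewrite -{1}(inord_val i) stv_ins // -ltnS.
have E : forall G : nat -> V, \sum_(0 <= x < n) G x = \sum_(0 <= x < n.-1) G x + G n.-1.
  by move=> G; rewrite -big_nat_recr // prednK.
rewrite big_nat_recr //= E.
have -> : jv n n = n.
  rewrite /jv; have -> : (n < n.-1)%N = false by lia.
  by have -> : (n == n.-1) = false by lia.
have -> : jv n n.-1 = n.+1 by rewrite /jv ltnn eqxx.
have -> : Phi s F n = F (cycfix s) (cnt s 0) (cnt s 1) (cnt s 2) (cnt s 3) (cnt s 4).+1 by rewrite /Phi eqxx.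
have -> : Phi s F n.+1 = F (cycfix s) (cnt s 0) (cnt s 1) (cnt s 2) (cnt s 3).+1 (cnt s 4).
  by rewrite /Phi eqxx; have -> : (n.+1 == n) = false by lia.
rewrite (@eq_big_nat _ _ _ 0 n.-1 _ (fun x => Phi s F x.+1)); last first.
  by move=> x Hx; rewrite /jv; have -> : (x < n.-1)%N by lia.
rewrite -(big_add1 _ _ 0 n xpredT (Phi s F)).
rewrite (eq_big_nat _ _ (@Phi_mid)).
rewrite !big_split /= !sumrMnr.
have C0 : (\sum_(1 <= j < n) (ty (P j) j (S j) == 0)%N)%N = cnt s 0 by [].
have C3 : (\sum_(1 <= j < n) (ty (P j) j (S j) == 3)%N)%N = cnt s 3 by [].
have C4 : (\sum_(1 <= j < n) (ty (P j) j (S j) == 4)%N)%N = cnt s 4 by [].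
have A0 : (\sum_(1 <= j < n) ((j < S j) && (ty (P (S j)) (S j) (S (S j)) == 0)))%N = cnt s 0.
  rewrite (sum_asc s n0 (fun b => ty (P b) b (S b) == 0%N)); apply: eq_big_nat => b Hb.
  by rewrite ty0; case: (P b < b)%N.
have A2 : (\sum_(1 <= j < n) ((j < S j) && (ty (P (S j)) (S j) (S (S j)) == 2)))%N = cnt s 2.
  rewrite (sum_asc s n0 (fun b => ty (P b) b (S b) == 2%N)); apply: eq_big_nat => b Hb.
  by rewrite /ty; case: (P b < b)%N; case: ifP => //; case: ifP.
rewrite C0 C3 C4 A0 A2 /TF.
ring.
Qed.
End SumJJ.

Local Open Scope ring_scope.

Lemma ins_inj n : (0 < n)%N -> injective (fun p : 'S_n * 'I_n.+1 => ins p.1 p.2).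
Proof.
move=> n0 [s jj] [s' jj'] /=; rewrite /ins -!mulgA => /mulgI E.
have Ej : jj = jj'.
  have := congr1 (fun p => Sg p jj) E; rewrite /= !Sg_M !Sg_tperm eqxx /=.
  rewrite !Sg_lift /= eqxx.
  case: (eqVneq (jj : nat) jj') => [E1|Nj]; first by move=> _; apply: val_inj.
  have Hjj := ltn_ord jj; have Hjj' := ltn_ord jj'.
  case: (eqVneq (jj : nat) n) => [E2|N2].
    have N3 : (jj' == n :> nat) = false by lia.
    have U : unbump n jj' = jj' by rewrite unbumpE; case: ifP; lia.
    have L := Sg_lt s' (x := jj').
    rewrite N3 U bumpE; case: ifP; lia.
  have U : unbump n jj = jj by rewrite unbumpE; case: ifP; lia.
  have L := Sg_lt s' (x := jj).
  have N3 : (jj == n :> nat) = false by lia.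
  rewrite N3 U bumpE; case: ifP; lia.
subst jj'; move/mulgI: E => E.
congr (_, _); apply/permP => k.
have := congr1 (fun p : {perm 'I_n.+1} => p (lift ord_max k)) E; rewrite /= !lift_perm_lift.
exact: lift_inj.
Qed.

Lemma sum_ins n (V : nmodType) (G : 'S_n.+1 -> V) : (0 < n)%N ->
  \sum_(s' : 'S_n.+1) G s' = \sum_(s : 'S_n) \sum_(jj < n.+1) G (ins s jj).
Proof.
move=> n0.
have bij : bijective (fun p : 'S_n * 'I_n.+1 => ins p.1 p.2).
  apply: inj_card_bij (ins_inj n0) _.
  by rewrite card_prod !card_Sn card_ord factS mulnC.
rewrite (reindex (fun p : 'S_n * 'I_n.+1 => ins p.1 p.2)) /=; last exact: onW_bij.
by rewrite pair_bigA.
Qed.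

Lemma KCL n (V : comNzSemiRingType) F : (0 < n)%N ->
  \sum_(s' : 'S_n.+1) stv F s' =
  \sum_(s : 'S_n) TF F (cycfix s) (cnt s 0) (cnt s 1) (cnt s 2) (cnt s 3) (cnt s 4) :> V.
Proof.
move=> n0; rewrite sum_ins //; apply: eq_bigr => s _; exact: sum_jj.
Qed.

Local Open Scope ring_scope.

Definition DD (V : zmodType) (F : nat -> nat -> nat -> nat -> nat -> nat -> V)
  (c k v a d f : nat) : V :=
  F c k v a.-1 d f *+ a - F c k v a d.-1 f *+ d + F c k v a d f.-1 *+ f.

Lemma TF_DD (V : comNzRingType) (F : nat -> nat -> nat -> nat -> nat -> nat -> V) c k v a d f :
  TF (DD F) c k v a d f = DD (TF F) c k v a d f.
Proof.
rewrite /TF /DD.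
by case: a => [|a]; case: d => [|d]; case: f => [|f]; rewrite /= ?mulr0n; ring.
Qed.

Lemma cnt_S1 (s : 'S_1) T : cnt s T = 0%N.
Proof. by rewrite /cnt /cntf big_geq. Qed.

Lemma M1 n (V : comNzRingType) (G : nat -> nat -> nat -> nat -> nat -> nat -> V) :
  (0 < n)%N -> \sum_(s : 'S_n) stv (DD G) s = 0.
Proof.
case: n => [//|n] _; elim: n G => [|n IH] G.
  by apply: big1 => s _; rewrite /stv !cnt_S1 /DD !mulr0n subrr addr0.
rewrite KCL //.
rewrite (eq_bigr (fun s => stv (DD (TF G)) s)); first exact: IH.
by move=> s _; rewrite TF_DD.
Qed.

Definition Fb (M : nat) (c k v a d f : nat) : nat := ((v != k) || (k + v + a + d + f != M)%N).

Lemma TF_Fb m c k v a d f : v = k -> (k + v + a + d + f = m)%N -> TF (Fb m.+1) c k v a d f = 0%N.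
Proof.
move=> Hv Hs; rewrite /TF /Fb; subst v.
case: a Hs => [|a] Hs; case: d Hs => [|d] Hs; case: f Hs => [|f] Hs; rewrite /= ?eqxx /=;
repeat match goal with |- context [(?x != ?y)] => rewrite (_ : (x != y) = false); last by lia end;
by rewrite /= ?mul0rn ?mulr0n.
Qed.

Lemma inv_sum n : (0 < n)%N -> \sum_(s : 'S_n) stv (Fb n.-1) s = 0%N.
Proof.
case: n => [//|n] _; elim: n => [|n IH].
  by apply: big1 => s _; rewrite /stv !cnt_S1 /Fb.
rewrite KCL //=; apply: big1 => s _.
move/eqP: IH; rewrite sum_nat_eq0 => /forallP /(_ s) /=.
rewrite /stv /Fb; case: (eqVneq (cnt s 1)%N (cnt s 0)%N) => //= Hv.
case: (eqVneq (cnt s 0 + cnt s 1 + cnt s 2 + cnt s 3 + cnt s 4)%N n) => //= Hs _.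
exact: TF_Fb.
Qed.

Lemma invs n (s : 'S_n) : (0 < n)%N ->
  (cnt s 1 = cnt s 0)%N /\ (cnt s 0 + cnt s 1 + cnt s 2 + cnt s 3 + cnt s 4 = n.-1)%N.
Proof.
move=> n0; move/eqP: (inv_sum n0); rewrite sum_nat_eq0 => /forallP /(_ s) /=.
rewrite /stv /Fb; case: (eqVneq (cnt s 1)%N (cnt s 0)%N) => //= Hv.
by case: (eqVneq (cnt s 0 + cnt s 1 + cnt s 2 + cnt s 3 + cnt s 4)%N n.-1) => //= Hs _.
Qed.

Local Open Scope ring_scope.

Section M2.
Variable R : numDomainType.
Variables (q y z t s r : R).

Definition Gp (c k v a d f : nat) : {poly R} :=
  (q ^+ c * y ^+ k * z ^+ v)%:P * ((t%:P + 'X) ^+ a * (s%:P - 'X) ^+ d * (r%:P + 'X) ^+ f).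

Lemma Gp_deriv c k v a d f : (Gp c k v a d f)^`() = DD Gp c k v a d f.
Proof.
rewrite /Gp /DD deriv_mulC !derivM !deriv_exp !derivD derivN !derivC derivX.
ring.
Qed.

Lemma const_of_deriv0 (p : {poly R}) : p^`() = 0 -> forall x, p.[x] = p.[0].
Proof.
move=> H x.
have -> : p = (p`_0)%:P.
  apply/polyP => i; rewrite coefC; case: i => [//|i] /=.
  have := congr1 (fun u : {poly R} => u`_i) H; rewrite coef_deriv coef0 => /eqP.
  by rewrite mulrn_eq0 /= => /eqP.
by rewrite !hornerC.
Qed.

Lemma M2 n (h : R) : (0 < n)%N ->
  \sum_(sg : 'S_n) stv (fun c k v a d f => q ^+ c * y ^+ k * z ^+ v * ((t + h) ^+ a * (s - h) ^+ d * (r + h) ^+ f)) sg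
  = \sum_(sg : 'S_n) stv (fun c k v a d f => q ^+ c * y ^+ k * z ^+ v * (t ^+ a * s ^+ d * r ^+ f)) sg.
Proof.
move=> n0; set Pi := \sum_(sg : 'S_n) stv Gp sg.
have HD : Pi^`() = 0.
  rewrite /Pi raddf_sum /= (eq_bigr (fun sg => stv (DD Gp) sg)); first exact: M1.
  by move=> sg _; rewrite /stv Gp_deriv.
have E x : Pi.[x] = \sum_(sg : 'S_n) stv (fun c k v a d f => q ^+ c * y ^+ k * z ^+ v * ((t + x) ^+ a * (s - x) ^+ d * (r + x) ^+ f)) sg.
  rewrite /Pi horner_sum; apply: eq_bigr => sg _.
  by rewrite /stv /Gp !hornerE.
have := const_of_deriv0 HD h; rewrite !E.
move=> ->; apply: eq_bigr => sg _; rewrite /stv.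
by rewrite !addr0 subr0.
Qed.
End M2.

Local Open Scope ring_scope.

Lemma Pccx_stv (R : comNzRingType) n (q X T : R) : (0 < n)%N ->
  Pccx n q X T = \sum_(sg : 'S_n) stv (fun c k v a d f =>
     q ^+ c * (X * T) ^+ k * 1 ^+ v * (T ^+ a * 1 ^+ d * T ^+ f)) sg.
Proof.
move=> n0; apply: eq_bigr => sg _; rewrite /stv cpk_cnt exc_cnt //.
have [Hv _] := invs sg n0.
rewrite Hv !expr1n !exprD exprMn.
move: (cycfix sg) (cnt sg 0) (cnt sg 2) (cnt sg 4) => c k a f; ring.
Qed.

Lemma Acf_Pccx (R : comNzRingType) n (q t : R) : Acf n q t = Pccx n q 1 t.
Proof. by apply: eq_bigr => sg _; rewrite expr1n mulr1. Qed.


Lemma main_eq (R : comNzRingType) n (q al X T y t0 h : R) : (0 < n)%N ->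
  al * al * X * T = y -> al * T = t0 + h -> al = 1 - h ->
  al ^+ n.-1 * Pccx n q X T = \sum_(sg : 'S_n) stv (fun c k v a d f =>
     q ^+ c * y ^+ k * 1 ^+ v * ((t0 + h) ^+ a * (1 - h) ^+ d * (t0 + h) ^+ f)) sg.
Proof.
move=> n0 E1 E2 E3; rewrite Pccx_stv // mulr_sumr; apply: eq_bigr => sg _.
rewrite /stv; have [Hv Hs] := invs sg n0.
rewrite -Hs Hv -E1 -E2 -E3 !expr1n.
move: (cycfix sg) (cnt sg 0) (cnt sg 2) (cnt sg 3) (cnt sg 4) => c k a d f.
rewrite !exprD !exprMn; ring.
Qed.

Theorem theorem3p5 (R : rcfType) (n : nat) (n_ge1 : (1 <= n)%N) :
  (forall q x t : R, 1 + x != 0 -> x + t != 0 -> 1 + x * t != 0 ->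
     Acf n q t =
     ((1 + x * t) / (1 + x)) ^+ n.-1 *
     Pccx n q ((1 + x) ^+ 2 * t / ((x + t) * (1 + x * t))) ((x + t) / (1 + x * t)))
  /\
  (forall q x t : R, 0 <= (1 + t) ^+ 2 - 4%:R * x * t -> x != 0 -> x != 1 -> t != 0 ->
     let u := (1 + t ^+ 2 - 2%:R * x * t - (1 - t) * Num.sqrt ((1 + t) ^+ 2 - 4%:R * x * t))
              / (2%:R * (1 - x) * t) in
     let v := ((1 + t) ^+ 2 - 2%:R * x * t - (1 + t) * Num.sqrt ((1 + t) ^+ 2 - 4%:R * x * t))
              / (2%:R * x * t) in
     1 + u * v != 0 ->
     Pccx n q x t = ((1 + u) / (1 + u * v)) ^+ n.-1 * Acf n q v).
Proof.
have n0 : (0 < n)%N := n_ge1.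
split.
  move=> q x t H1 H2 H3.
  set h := x * (1 - t) / (1 + x).
  rewrite (@main_eq _ n q _ _ _ t t h n0); first last.
  - by rewrite /h; field; rewrite ?H1 ?H2 ?H3.
  - by rewrite /h; field; rewrite ?H1 ?H2 ?H3.
  - by field; rewrite ?H1 ?H2 ?H3.
  rewrite Acf_Pccx Pccx_stv //.
  transitivity (\sum_(sg : 'S_n) stv (fun c k v a d f =>
     q ^+ c * t ^+ k * 1 ^+ v * (t ^+ a * 1 ^+ d * t ^+ f)) sg).
    by apply: eq_bigr => sg _; rewrite /stv mul1r.
  by symmetry; apply: M2.
move=> q x t HD hx0 hx1 ht0.
set S := Num.sqrt _.
have HS : S ^+ 2 = (1 + t) ^+ 2 - 4%:R * x * t by rewrite sqr_sqrtr.
set D := (1 + t) ^+ 2 - 4%:R * x * t in HS.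
set U := 1 + t ^+ 2 - 2%:R * x * t - (1 - t) * S.
set V := (1 + t) ^+ 2 - 2%:R * x * t - (1 + t) * S.
set A := 2%:R * (1 - x) * t.
set B := 2%:R * x * t.
move=> u v Huv.
have h2 : (2%:R : R) != 0 by rewrite pnatr_eq0.
have h1x : 1 - x != 0 by rewrite subr_eq0 eq_sym.
have hA : A != 0 by rewrite /A !mulf_neq0.
have hB : B != 0 by rewrite /B !mulf_neq0.
have key1 : U * B + V * A = t * (A * B + U * V).
  apply/eqP; rewrite -subr_eq0; apply/eqP.
  transitivity ((- t + t^+3) * (S ^+ 2 - D)); first by rewrite /U /V /A /B /D; ring.
  by rewrite HS subrr mulr0.
have key2 : (A + U) ^+ 2 * V * B = x * t * (A * B + U * V) ^+ 2.
  apply/eqP; rewrite -subr_eq0; apply/eqP.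
  transitivity ((- x*t + (2%:R)*x*t*S - x*t*S^+2 - (6%:R)*x*t^+2 + (6%:R)*x*t^+2*S - (9%:R)*x*t^+3 - (2%:R)*x*t^+3*S + (2%:R)*x*t^+3*S^+2 - (4%:R)*x*t^+4 - (6%:R)*x*t^+4*S + x*t^+5 - x*t^+5*S^+2 + (2%:R)*x*t^+6 + x*t^+7 + (8%:R)*x^+2*t^+2 - (8%:R)*x^+2*t^+2*S + (24%:R)*x^+2*t^+3 + (4%:R)*x^+2*t^+4 + (8%:R)*x^+2*t^+4*S - (4%:R)*x^+2*t^+6 - (16%:R)*x^+3*t^+3) * (S ^+ 2 - D)); first by rewrite /U /V /A /B /D; ring.
  by rewrite HS subrr mulr0.
have I1 : u + v = t * (1 + u * v).
  have -> : u + v = (U * B + V * A) / (A * B) by rewrite /u /v; field; rewrite hA hB.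
  by rewrite key1 /u /v; field; rewrite hA hB.
have I2 : (1 + u) ^+ 2 * v = x * t * (1 + u * v) ^+ 2.
  have -> : (1 + u) ^+ 2 * v = (A + U) ^+ 2 * V * B / (A ^+ 2 * B ^+ 2).
    by rewrite /u /v; field; rewrite hA hB.
  by rewrite key2 /u /v; field; rewrite hA hB.
set rho := (1 + u) / (1 + u * v).
have R1 : rho * (1 + v) = 1 + t.
  have E : (1 + u) * (1 + v) = (1 + t) * (1 + u * v).
    have -> : (1 + u) * (1 + v) = (1 + t) * (1 + u * v) + ((u + v) - t * (1 + u * v)) by ring.
    by rewrite I1 subrr addr0.
  by rewrite /rho mulrAC E mulfK.
have R2 : rho * rho * 1 * v = x * t.
  have -> : rho * rho * 1 * v = ((1 + u) ^+ 2 * v) / (1 + u * v) ^+ 2.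
    by rewrite /rho; field; rewrite Huv.
  by rewrite I2 mulfK // expf_neq0.
rewrite Acf_Pccx (@main_eq _ n q rho 1 v (x * t) t (rho * v - t) n0); first last.
- apply/eqP; rewrite -subr_eq0.
  have -> : rho - (1 - (rho * v - t)) = rho * (1 + v) - (1 + t) by ring.
  by rewrite R1 subrr.
- by ring.
- exact: R2.
rewrite Pccx_stv //; symmetry; exact: M2.
Qed.
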